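(* Let $(\Re,\oplus,\circ)$ and $(\hat S,+,\cdot)$ be commutative Krasner hyperrings with identity, and let $\phi$ be a global hyperideal reduction function and $\delta$ a global hyperideal expansion function. (i) If $\mu:\Re\to\hat S$ is a good homomorphism and $M$ is a $\phi$-$\delta$-primary hyperideal of $\hat S$, then $\mu^{-1}(M)=\Re$ or $\mu^{-1}(M)$ is a $\phi$-$\delta$-primary hyperideal of $\Re$. (ii) If $\mu:\Re\to\hat S$ is a good epimorphism and $N$ is a hyperideal of $\Re$ containing $\mathrm{Ker}(\mu)$, then $N$ is a $\phi$-$\delta$-primary hyperideal of $\Re$ if and only if $\mu(N)$ is a $\phi$-$\delta$-primary hyperideal of $\hat S$.
   Context: Krasner hyperring: $(\Re,\oplus)$ canonical hypergroup (associative commutative hyperoperation, scalar zero $0$, unique inverses, reversibility), $(\Re,\circ)$ commutative semigroup with identity $1\neq 0$ and $0$ absorbing, $\circ$ distributive over $\oplus$. Hyperideals: nonempty $N$ with $a\oplus(-b)\subseteq N$, $r\circ a\in N$; $L(\Re)$ is the set of hyperideals. A good homomorphism $\mu:\Re\to\hat S$ satisfies $\mu(a\oplus b)=\mu(a)+\mu(b)$, $\mu(a\circ b)=\mu(a)\cdot\mu(b)$, $\mu(0)=0$; a good epimorphism is a surjective one; $\mathrm{Ker}(\mu)=\mu^{-1}(0)$. A hyperideal reduction on a hyperring $\Re$ is $\phi:L(\Re)\to L(\Re)\cup\{\emptyset\}$ with $\phi(N)\subseteq N$ and monotone; a hyperideal expansion is $\delta:L(\Re)\to L(\Re)$ with $N\subseteq\delta(N)$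 and monotone. Here $\phi,\delta$ are assigned on every Krasner hyperring; $\phi$ is global if for every good homomorphism $\mu:\Re\to\hat S$ and every $M\in L(\hat S)$, $\phi(\mu^{-1}(M))=\mu^{-1}(\phi(M))$; $\delta$ is global if likewise $\delta(\mu^{-1}(M))=\mu^{-1}(\delta(M))$. A proper hyperideal $N$ is $\phi$-$\delta$-primary if $a\circ b\in N$, $a\circ b\notin\phi(N)$ imply $a\in N$ or $b\in\delta(N)$. *)

(* Defs.v *)
Set Implicit Arguments.

(* x \in hadd a b  is written  hadd a b x *)
Record KrasnerHyperring : Type := {
  carrier :> Type;
  hadd : carrier -> carrier -> carrier -> Prop;
  zero : carrier;
  hopp : carrier -> carrier;
  mul : carrier -> carrier -> carrier;
  one : carrier;
  hadd_nonempty : forall a b, exists x, hadd a b x;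
  hadd_assoc : forall a b c x,
    (exists y, hadd a b y /\ hadd y c x) <-> (exists y, hadd b c y /\ hadd a y x);
  hadd_comm : forall a b x, hadd a b x <-> hadd b a x;
  hadd_zero : forall a x, hadd a zero x <-> x = a;
  hopp_inv : forall a, hadd a (hopp a) zero;
  hopp_unique : forall a b, hadd a b zero -> b = hopp a;
  hadd_rev : forall a b c, hadd a b c -> hadd c (hopp b) a;
  mul_assoc : forall a b c, mul a (mul b c) = mul (mul a b) c;
  mul_comm : forall a b, mul a b = mul b a;
  mul_one : forall a, mul one a = a;
  one_neq_zero : one <> zero;
  mul_zero : forall a, mul zero a = zero;
  mul_hadd : forall a b c x,
    (exists y, hadd b c y /\ x = mul a y) <-> hadd (mul a b) (mul a c) x
}.

Arguments hadd {k}.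
Arguments zero {k}.
Arguments hopp {k}.
Arguments mul {k}.
Arguments one {k}.

Definition hsubset {R : KrasnerHyperring} (A B : R -> Prop) : Prop :=
  forall x, A x -> B x.

Definition hyperideal (R : KrasnerHyperring) (N : R -> Prop) : Prop :=
  (exists x, N x) /\
  (forall a b, N a -> N b -> forall x, hadd a (hopp b) x -> N x) /\
  (forall r a, N a -> N (mul r a)).

Definition proper (R : KrasnerHyperring) (N : R -> Prop) : Prop :=
  exists x, ~ N x.

Definition hyperideal_reduction
  (phi : forall R : KrasnerHyperring, (R -> Prop) -> (R -> Prop)) : Prop :=
  forall R : KrasnerHyperring,
    (forall N, hyperideal R N ->
       ((forall x, ~ phi R N x) \/ hyperideal R (phi R N)) /\ hsubset (phi R N) N) /\
    (forall N M, hyperideal R N -> hyperideal R M -> hsubset N M ->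
       hsubset (phi R N) (phi R M)).

Definition hyperideal_expansion
  (delta : forall R : KrasnerHyperring, (R -> Prop) -> (R -> Prop)) : Prop :=
  forall R : KrasnerHyperring,
    (forall N, hyperideal R N -> hyperideal R (delta R N) /\ hsubset N (delta R N)) /\
    (forall N M, hyperideal R N -> hyperideal R M -> hsubset N M ->
       hsubset (delta R N) (delta R M)).

Definition good_hom {R S : KrasnerHyperring} (mu : R -> S) : Prop :=
  (forall a b y, (exists x, hadd a b x /\ y = mu x) <-> hadd (mu a) (mu b) y) /\
  (forall a b, mu (mul a b) = mul (mu a) (mu b)) /\
  mu zero = zero.

Definition good_epi {R S : KrasnerHyperring} (mu : R -> S) : Prop :=
  good_hom mu /\ forall y, exists x, mu x = y.

Definition preimage {R S : KrasnerHyperring} (mu : R -> S) (M : S -> Prop) : R -> Prop :=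
  fun x => M (mu x).

Definition image {R S : KrasnerHyperring} (mu : R -> S) (N : R -> Prop) : S -> Prop :=
  fun y => exists x, N x /\ mu x = y.

Definition Ker {R S : KrasnerHyperring} (mu : R -> S) : R -> Prop :=
  fun x => mu x = zero.

Definition global_fun
  (phi : forall R : KrasnerHyperring, (R -> Prop) -> (R -> Prop)) : Prop :=
  forall (R S : KrasnerHyperring) (mu : R -> S), good_hom mu ->
    forall M, hyperideal S M ->
      phi R (preimage mu M) = preimage mu (phi S M).

Definition phi_delta_primary
  (phi delta : forall R : KrasnerHyperring, (R -> Prop) -> (R -> Prop))
  (R : KrasnerHyperring) (N : R -> Prop) : Prop :=
  hyperideal R N /\ proper R N /\
  forall a b, N (mul a b) -> ~ phi R N (mul a b) -> N a \/ delta R N b.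

(* Main.v *)
Require Import Defs.
From Stdlib Require Import FunctionalExtensionality PropExtensionality Classical.
Set Implicit Arguments.

Lemma hopp_hopp (R : KrasnerHyperring) (a : R) : hopp (hopp a) = a.
Proof.
  symmetry. apply hopp_unique. apply hadd_comm. apply hopp_inv.
Qed.

Lemma hyp_zero (R : KrasnerHyperring) (N : R -> Prop) : hyperideal R N -> N zero.
Proof.
  intros [[x Hx] [Hc _]]. exact (Hc x x Hx Hx zero (hopp_inv _ x)).
Qed.

Lemma mu_opp (R S : KrasnerHyperring) (mu : R -> S) : good_hom mu ->
  forall b, mu (hopp b) = hopp (mu b).
Proof.
  intros [Ha [_ H0]] b. apply hopp_unique. rewrite <- H0.
  apply Ha. exists zero. split; [apply hopp_inv|reflexivity].
Qed.

Lemma preimage_hyp (R S : KrasnerHyperring) (mu : R -> S) : good_hom mu ->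
  forall M, hyperideal S M -> hyperideal R (preimage mu M).
Proof.
  intros Hg M HM. pose proof (hyp_zero HM) as HM0.
  destruct HM as [_ [Hc Hm]]. pose proof Hg as [Ha [Hmul H0]].
  split; [|split].
  - exists zero. unfold preimage. rewrite H0. exact HM0.
  - intros a b Pa Pb x Hx. unfold preimage in *.
    apply (Hc (mu a) (mu b) Pa Pb). rewrite <- (mu_opp Hg). apply Ha.
    exists x. auto.
  - intros r a Pa. unfold preimage in *. rewrite Hmul. apply Hm. exact Pa.
Qed.

Lemma preimage_primary (R S : KrasnerHyperring) (mu : R -> S)
  phi delta (Hphig : global_fun phi) (Hdeltag : global_fun delta) :
  good_hom mu -> forall M, phi_delta_primary phi delta S M ->
  proper R (preimage mu M) -> phi_delta_primary phi delta R (preimage mu M).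
Proof.
  intros Hg M [HM [_ Hp]] Hpr. split; [apply preimage_hyp; auto|split; auto].
  intros a b Hab Hnp. rewrite (Hphig R S mu Hg M HM) in Hnp.
  rewrite (Hdeltag R S mu Hg M HM). unfold preimage in *.
  destruct Hg as [_ [Hmul _]]. rewrite Hmul in Hab, Hnp.
  apply Hp; auto.
Qed.

Lemma image_hyp (R S : KrasnerHyperring) (mu : R -> S) : good_epi mu ->
  forall N, hyperideal R N -> hyperideal S (image mu N).
Proof.
  intros [Hg Hs] N HN. pose proof Hg as [Ha [Hmul H0]].
  destruct HN as [[x0 Hx0] [Hc Hm]]. split; [|split].
  - exists (mu x0). exists x0. auto.
  - intros a' b' [a [Na Ea]] [b [Nb Eb]] x Hx. subst.
    rewrite <- (mu_opp Hg) in Hx. apply Ha in Hx. destruct Hx as [w [Hw Ew]].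
    exists w. split; [apply (Hc a b Na Nb w Hw)|auto].
  - intros r' a' [a [Na Ea]]. destruct (Hs r') as [r Er]. subst.
    exists (mul r a). split; [apply Hm; auto|apply Hmul].
Qed.

Lemma preimage_image (R S : KrasnerHyperring) (mu : R -> S) : good_epi mu ->
  forall N, hyperideal R N -> hsubset (Ker mu) N -> preimage mu (image mu N) = N.
Proof.
  intros [Hg Hs] N HN HK. pose proof (hyp_zero HN) as N0.
  pose proof Hg as [Ha [Hmul H0]].
  destruct HN as [_ [Hc Hm]].
  apply functional_extensionality. intro x. apply propositional_extensionality.
  split.
  - intros [n [Nn En]].
    assert (Hz : hadd (mu x) (mu (hopp n)) zero).
    { rewrite (mu_opp Hg), <- En. apply hopp_inv. }
    apply Ha in Hz. destruct Hz as [z [Hz Ez]].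
    assert (Nz : N z) by (apply HK; unfold Ker; auto).
    assert (Nn' : N (hopp n)).
    { apply (Hc zero n N0 Nn). apply hadd_comm. apply hadd_zero. reflexivity. }
    apply hadd_rev in Hz. apply (Hc z (hopp n) Nz Nn' x Hz).
  - intro Nx. exists x. auto.
Qed.

Theorem mainTheorem4
  (phi delta : forall R : KrasnerHyperring, (R -> Prop) -> (R -> Prop))
  (Hphi : hyperideal_reduction phi) (Hdelta : hyperideal_expansion delta)
  (Hphig : global_fun phi) (Hdeltag : global_fun delta) :
  (forall (R S : KrasnerHyperring) (mu : R -> S), good_hom mu ->
     forall M : S -> Prop, phi_delta_primary phi delta S M ->
       (forall x, preimage mu M x) \/ phi_delta_primary phi delta R (preimage mu M)) /\
  (forall (R S : KrasnerHyperring) (mu : R -> S), good_epi mu ->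
     forall N : R -> Prop, hyperideal R N -> hsubset (Ker mu) N ->
       (phi_delta_primary phi delta R N <-> phi_delta_primary phi delta S (image mu N))).
Proof.
  split.
  - intros R S mu Hg M HM.
    destruct (classic (forall x, preimage mu M x)) as [H|H]; [left; auto|right].
    apply preimage_primary; auto. apply not_all_ex_not in H. exact H.
  - intros R S mu He N HN HK.
    pose proof (preimage_image He HN HK) as E.
    pose proof (image_hyp He HN) as HI.
    pose proof He as [Hg Hs].
    split.
    + intros [_ [[x Hx] Hp]]. split; [auto|split].
      * exists (mu x). intro C. apply Hx. rewrite <- E. exact C.
      * intros a' b' Hab Hnp. destruct (Hs a') as [a Ea]. destruct (Hs b') as [b Eb].
        subst. pose proof Hg as [_ [Hmul _]].
        rewrite <- Hmul in Hab, Hnp.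
        assert (Nab : N (mul a b)) by (rewrite <- E; exact Hab).
        assert (Hnp' : ~ phi R N (mul a b)).
        { rewrite <- E, (Hphig R S mu Hg _ HI). exact Hnp. }
        destruct (Hp a b Nab Hnp') as [H|H]; [left; exists a; auto|right].
        rewrite <- E, (Hdeltag R S mu Hg _ HI) in H. exact H.
    + intros HP. rewrite <- E. apply preimage_primary; auto.
      destruct HP as [_ [[y Hy] _]]. destruct (Hs y) as [x Ex]. subst.
      exists x. exact Hy.
Qed.
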